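(* Let $m$ be a non-negative integer and let $A,D$ be $k$-tuples of elements of $\mathbb{Z}/m\mathbb{Z}$. Then for every non-negative integer $i$, $$\partial^i\,\mathrm{IAP}(A,D)=(-1)^i\,\mathrm{IAP}\big(AC_k^{(i)}+DT_k^{(i)},\,DC_k^{(i)}\big),$$ where $C_k^{(i)}=\big(\sum_{\alpha\in\mathbb{Z}}\binom{i}{\alpha k+r-s}\big)_{1\le r,s\le k}$ and $T_k^{(i)}=\big(\sum_{\alpha\in\mathbb{Z}}\alpha\binom{i}{\alpha k+r-s}\big)_{1\le r,s\le k}$.
   Context: $\mathbb{Z}/0\mathbb{Z}=\mathbb{Z}$; $\binom{a}{b}=0$ if $b<0$ or $b>a$. Tuples are row vectors, integer matrices act after reduction mod $m$. $\mathrm{IAP}(A,D)$, for $A=(a_0,\dots,a_{k-1})$, $D=(d_0,\dots,d_{k-1})$, is $(u_j)_{j\in\mathbb{Z}}$ with $u_{qk+r}=a_r+qd_r$. For a sequence $S=(u_j)_{j\in\mathbb{Z}}$, $\partial S=(-u_j-u_{j+1})_{j\in\mathbb{Z}}$, and $\partial^i$ is the $i$-th iterate ($\partial^0 S=S$). *)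

(* Defs.v *)
(* Z/mZ is modelled by int with congruence mod m
   (intdiv's (a = b %[mod m])%Z, which for m = 0 is plain equality). *)
From mathcomp Require Import all_boot all_order all_algebra.
Set Implicit Arguments. Unset Strict Implicit. Unset Printing Implicit Defensive.
Import Order.TTheory GRing.Theory Num.Theory.
Local Open Scope ring_scope.

Definition binomZ (a : nat) (b : int) : int :=
  match b with Posz n => ('C(a, n))%:Z | Negz _ => 0 end.

(* entry n (0-based) of a row vector, 0 if out of range *)
Definition rvget (k : nat) (A : 'rV[int]_k) (n : nat) : int :=
  odflt 0 (omap (fun r : 'I_k => A 0 r) (insub n)).

(* IAP(A,D) : u_{qk+r} = a_r + q d_r, with 0 <= r < k *)
Definition IAP (k : nat) (A D : 'rV[int]_k) : int -> int :=
  fun j => let q := (j %/ k%:Z)%Z in let r := absz (j %% k%:Z)%Z in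
           rvget A r + q * rvget D r.

Definition dpart (S : int -> int) : int -> int := fun j => - S j - S (j + 1).

(* summation range for alpha: alpha = j - (i+1), j < 2i+3, i.e. |alpha| <= i+1.
   For k >= 1 every alpha with binom(i, alpha k + r - s) <> 0 lies in 0..i,
   so this finite sum equals the sum over all alpha in Z. *)
Definition alphaZ (i j : nat) : int := j%:Z - (i.+1)%:Z.

Definition Cmx (k i : nat) : 'M[int]_k :=
  \matrix_(r < k, s < k)
    \sum_(j < (2 * i + 3)%N) binomZ i (alphaZ i j * k%:Z + r%:Z - s%:Z).

Definition Tmx (k i : nat) : 'M[int]_k :=
  \matrix_(r < k, s < k)
    \sum_(j < (2 * i + 3)%N) alphaZ i j * binomZ i (alphaZ i j * k%:Z + r%:Z - s%:Z).

(* Main.v *)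
Require Import Defs.
From mathcomp Require Import all_boot all_order all_algebra zify ring.
Import Order.TTheory GRing.Theory Num.Theory.
Local Open Scope ring_scope.

Lemma iter_dpart (S : int -> int) (i : nat) (j : int) :
  iter i dpart S j = (-1) ^+ i * \sum_(t < i.+1) ('C(i, t))%:Z * S (j + t%:Z).
Proof.
elim: i j => [|i IH] j.
  by rewrite /= big_ord1 bin0 expr0 !mul1r addr0.
rewrite iterS /dpart !IH.
rewrite (big_ord_recl i.+1) bin0 /= addr0.
have -> : \sum_(i0 < i.+1) ('C(i.+1, bump 0 i0))%:Z * S (j + (bump 0 i0)%:Z)
  = \sum_(t < i.+1) (('C(i, t.+1))%:Z * S (j + (t.+1)%:Z) + ('C(i, t))%:Z * S (j + (t.+1)%:Z)).
  by apply: eq_bigr => t _; rewrite /bump /= binS PoszD mulrDl.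
rewrite big_split /=.
have -> : \sum_(t < i.+1) ('C(i, t.+1))%:Z * S (j + (t.+1)%:Z)
   = \sum_(t < i) ('C(i, t.+1))%:Z * S (j + (t.+1)%:Z).
  by rewrite big_ord_recr /= bin_small // mul0r addr0.
have -> : \sum_(t < i.+1) ('C(i, t))%:Z * S (j + (t.+1)%:Z)
   = \sum_(t < i.+1) ('C(i, t))%:Z * S (j + 1 + t%:Z).
  by apply: eq_bigr => t _; rewrite -addrA -PoszD add1n.
rewrite exprS.
rewrite addrA.
have -> : 1%:Z * S j + \sum_(t < i) ('C(i, t.+1))%:Z * S (j + (t.+1)%:Z)
  = \sum_(t < i.+1) ('C(i, t))%:Z * S (j + t%:Z).
  by rewrite [RHS]big_ord_recl bin0 addr0.
ring.
Qed.

Lemma binomZ_sum (i : nat) (x : int) :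
  binomZ i x = \sum_(t < i.+1) (x == t%:Z)%:R * ('C(i, t))%:Z.
Proof.
case: x => [n|n] /=; last first.
  by rewrite big1 // => t _.
case: (ltnP n i.+1) => Hn.
  rewrite (bigD1 (Ordinal Hn)) //= eqxx mul1r big1 ?addr0 // => t Ht.
  have -> : (Posz n == Posz t) = false.
    apply/negbTE; apply: contra Ht => /eqP [] E.
    by apply/eqP; apply: val_inj; rewrite /= E.
  by rewrite mul0r.
rewrite bin_small // big1 // => t _.
have -> : (Posz n == Posz t) = false.
  apply/negbTE/eqP => [[E]]; move: (ltn_ord t); rewrite -E; lia.
by rewrite mul0r.
Qed.

Lemma cond_eq (k s t r : nat) (a : int) : (0 < k)%N -> (r < k)%N ->
  (a * k%:Z + r%:Z - s%:Z == t%:Z) =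
  (r == (s + t) %% k)%N && (a == ((s + t) %/ k)%N%:Z).
Proof.
move=> Hk Hr.
have Hk0 : k%:Z != 0 by rewrite eqz_nat -lt0n.
apply/eqP/andP.
  move=> E.
  have E2 : a * k%:Z + r%:Z = (s + t)%N%:Z by rewrite PoszD -E; ring.
  have Er : r = ((s + t) %% k)%N.
    apply/eqP; rewrite -eqz_nat -modz_nat -E2.
    rewrite modzMDl modz_small //; apply/andP; split => //.
  split; first by apply/eqP.
  apply/eqP; rewrite -divz_nat -E2 divzMDl // divz_small ?addr0 //.
move=> [/eqP -> /eqP ->].
rewrite -PoszM.
have := divn_eq (s + t) k => E.
apply: (@addIr _ s%:Z); rewrite subrK -!PoszD; congr Posz; lia.
Qed.

Lemma rvgetE {k} (A : 'rV[int]_k) (r : 'I_k) : rvget A r = A 0 r.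
Proof. by rewrite /rvget valK. Qed.

Theorem proposition6 (m k : nat) (A D : 'rV[int]_k) (i : nat) :
  (0 < k)%N ->
  forall j : int,
    (iter i dpart (IAP A D) j =
       (-1) ^+ i * IAP (A *m Cmx k i + D *m Tmx k i) (D *m Cmx k i) j
     %[mod m%:Z])%Z.
Proof.
move=> Hk j.
suff -> : iter i dpart (IAP A D) j =
       (-1) ^+ i * IAP (A *m Cmx k i + D *m Tmx k i) (D *m Cmx k i) j by [].
rewrite iter_dpart; congr (_ * _).
have Hk0 : k%:Z != 0 by rewrite eqz_nat -lt0n.
set q := (j %/ k%:Z)%Z.
set s := absz (j %% k%:Z)%Z.
have Hs0 : (j %% k%:Z)%Z = s%:Z by rewrite /s gez0_abs // modz_ge0.
have Hs : (s < k)%N by rewrite -ltz_nat -Hs0 ltz_pmod // ltz_nat.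
have Hj : j = q * k%:Z + s%:Z by rewrite -Hs0 /q -divz_eq.
pose F (r : 'I_k) (a : int) := A 0 r + (q + a) * D 0 r.
pose r0 (t : nat) : 'I_k := Ordinal (ltn_pmod (s + t) Hk).
have HL : forall t : nat, IAP A D (j + t%:Z) = F (r0 t) ((s + t) %/ k)%N%:Z.
  move=> t; rewrite /IAP /=.
  have -> : j + t%:Z = q * k%:Z + (s + t)%N%:Z by rewrite Hj PoszD addrA.
  rewrite divzMDl // modzMDl divz_nat modz_nat absz_nat.
  rewrite /F -(rvgetE A (r0 t)) -(rvgetE D (r0 t)) /=.
  done.
under eq_bigr => t _ do rewrite HL.
rewrite /IAP /= -/q -/s.
have Er : forall M : 'rV[int]_k, rvget M s = M 0 (Ordinal Hs) by move=> M; exact: (rvgetE M (Ordinal Hs)).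
rewrite !Er !mxE.
under [X in _ = X + _ + _]eq_bigr => r _ do rewrite /Cmx mxE.
under [X in _ = _ + X + _]eq_bigr => r _ do rewrite /Tmx mxE.
under [X in _ = _ + _ * X]eq_bigr => r _ do rewrite /Cmx mxE.
set x := fun (r : 'I_k) (ja : 'I_(2 * i + 3)) => alphaZ i ja * k%:Z + r%:Z - s%:Z.
have R1 : \sum_(r < k) \sum_(ja < 2 * i + 3) binomZ i (x r ja) * F r (alphaZ i ja) =
   \sum_(r < k) A 0 r * (\sum_(ja < 2 * i + 3) binomZ i (x r ja)) +
   \sum_(r < k) D 0 r * (\sum_(ja < 2 * i + 3) alphaZ i ja * binomZ i (x r ja)) +
   q * \sum_(r < k) D 0 r * (\sum_(ja < 2 * i + 3) binomZ i (x r ja)).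
  rewrite mulr_sumr -!big_split /=; apply: eq_bigr => r _.
  rewrite !mulr_sumr -!big_split /=; apply: eq_bigr => ja _.
  rewrite /F; ring.
rewrite /x in R1; rewrite -R1 => {R1}.
have inner : forall t : 'I_i.+1,
   \sum_(r < k) \sum_(ja < 2 * i + 3) (x r ja == t%:Z)%:R * F r (alphaZ i ja)
   = F (r0 t) ((s + t) %/ k)%N%:Z.
  move=> t.
  rewrite (bigD1 (r0 t)) //= [X in _ + X]big1 ?addr0 => [|r Hr]; last first.
    apply: big1 => ja _; rewrite /x (cond_eq _ _ _ _ _ Hk (ltn_ord r)).
    have -> : (nat_of_ord r == (s + t) %% k)%N = false.
      by apply/negbTE; apply: contra Hr => /eqP E; apply/eqP/val_inj.
    by rewrite mul0r.
  have Hja : ((s + t) %/ k + i.+1 < 2 * i + 3)%N.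
    have : ((s + t) %/ k < i.+2)%N.
      rewrite ltn_divLR //; have := ltn_ord t; nia.
    lia.
  pose ja0 : 'I_(2 * i + 3) := Ordinal Hja.
  have Ea : alphaZ i ja0 = ((s + t) %/ k)%N%:Z by rewrite /alphaZ /= PoszD addrK.
  rewrite (bigD1 ja0) //= big1 ?addr0 => [|ja Hja'].
    by rewrite /x (cond_eq _ _ _ _ _ Hk (ltn_ord _)) Ea !eqxx /= mul1r.
  rewrite /x (cond_eq _ _ _ _ _ Hk (ltn_ord _)).
  have -> : (alphaZ i ja == ((s + t) %/ k)%N%:Z) = false.
    apply/negbTE; apply: contra Hja' => /eqP E; apply/eqP/val_inj => /=.
    apply/eqP; rewrite -eqz_nat PoszD -E /alphaZ subrK //.
  by rewrite andbF mul0r.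
under eq_bigr => t _ do rewrite -inner mulr_sumr.
rewrite exchange_big; apply: eq_bigr => r _.
under eq_bigr => t _ do rewrite mulr_sumr.
rewrite exchange_big; apply: eq_bigr => ja _.
rewrite binomZ_sum mulr_suml; apply: eq_bigr => t _.
rewrite /x; ring.
Qed.
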